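(* Let $A$ be a real $2\times 2$ matrix and $B$ a real $1\times 2$ matrix, and let $\mathrm{NT}=\{\vec{x}\in\mathbb{R}^2 : BA^k\vec{x}>0 \text{ for all integers } k\ge 0\}$. If the topological boundary $\partial\mathrm{NT}$ is composed of two rays $l_1=\{k\vec{v}_1:k\ge 0\}$ and $l_2=\{k\vec{v}_2:k\ge0\}$ starting from the origin (with $\vec{v}_1,\vec{v}_2$ nonzero and not positive multiples of each other), then $l_1$ or $l_2$ is contained in the line $\{\vec{x}: B\vec{x}=0\}$.
   Context: $\mathrm{NT}$ is the non-termination set of the loop ''while $(B\vec{x}>0)$ $\{\vec{x}:=A\vec{x}\}$''. *)

(* Defs.v *)
From Stdlib Require Import Reals.
Open Scope R_scope.

Definition vec2 := (R * R)%type.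

Record mat22 := Mat22 { a11 : R; a12 : R; a21 : R; a22 : R }.
Record mat12 := Mat12 { b1 : R; b2 : R }.

Definition mulA (A : mat22) (x : vec2) : vec2 :=
  (a11 A * fst x + a12 A * snd x, a21 A * fst x + a22 A * snd x).

Definition mulB (B : mat12) (x : vec2) : R := b1 B * fst x + b2 B * snd x.

Definition powA (A : mat22) (k : nat) (x : vec2) : vec2 := Nat.iter k (mulA A) x.

Definition scal (t : R) (v : vec2) : vec2 := (t * fst v, t * snd v).

Definition NT (A : mat22) (B : mat12) (x : vec2) : Prop :=
  forall k : nat, mulB B (powA A k x) > 0.

Definition dist2 (x y : vec2) : R := (fst x - fst y)^2 + (snd x - snd y)^2.

Definition boundary (S : vec2 -> Prop) (x : vec2) : Prop :=
  forall eps : R, eps > 0 ->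
    (exists y, S y /\ dist2 x y < eps^2) /\
    (exists z, ~ S z /\ dist2 x z < eps^2).

Definition ray (v : vec2) (x : vec2) : Prop := exists t : R, 0 <= t /\ x = scal t v.

(* Main.v *)
Require Import Defs.
From Stdlib Require Import Reals Lra Lia Psatz Classical.
Open Scope R_scope.

Lemma eig_lemma (x : nat -> R) (t d l m : R) :
  (forall k, x (S (S k)) = t * x (S k) - d * x k) ->
  l + m = t -> l * m = d -> 0 < l -> l < - m ->
  (forall k, 0 <= x k) -> x 1%nat = l * x 0%nat.
Proof.
  intros Hr Ht Hd Hl Hlm Hx.
  set (y k := x (S k) - l * x k).
  set (z k := x (S k) - m * x k).
  assert (Hy : forall k, y k = m ^ k * y 0%nat).
  { induction k. simpl; ring.
    replace (y (S k)) with (m * y k).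
    rewrite IHk; simpl; ring.
    unfold y. rewrite Hr. rewrite <- Ht, <- Hd. ring. }
  assert (Hz : forall k, z k = l ^ k * z 0%nat).
  { induction k. simpl; ring.
    replace (z (S k)) with (l * z k).
    rewrite IHk; simpl; ring.
    unfold z. rewrite Hr. rewrite <- Ht, <- Hd. ring. }
  assert (Hineq : forall k, m ^ k * y 0%nat <= l ^ k * z 0%nat).
  { intro k. rewrite <- Hy, <- Hz. unfold y, z.
    specialize (Hx k). nra. }
  destruct (Req_dec (y 0%nat) 0) as [H0|H0].
  { unfold y in H0. lra. }
  exfalso.
  set (M := - m). assert (HMe : M = - m) by reflexivity. clearbody M. assert (HM : 0 < M) by lra.
  set (q := l / M). assert (Hqe : q = l / M) by reflexivity. clearbody q.
  assert (Hq0 : 0 < q) by (rewrite Hqe; apply Rdiv_lt_0_compat; lra).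
  assert (Hq1 : q < 1).
  { rewrite Hqe. apply (Rmult_lt_reg_r M); [lra|]. unfold Rdiv. rewrite Rmult_assoc, Rinv_l by lra. lra. }
  assert (Hlq : forall k, l ^ k = q ^ k * M ^ k).
  { intro k. rewrite <- Rpow_mult_distr. f_equal. rewrite Hqe. field. lra. }
  assert (Hmq : forall k, m ^ k = (-1) ^ k * M ^ k).
  { intro k. rewrite <- Rpow_mult_distr. f_equal. rewrite HMe. ring. }
  remember (z 0%nat) as z0 eqn:Hz0e. remember (y 0%nat) as y0 eqn:Hy0e.
  assert (Hrz : 0 < Rabs y0 / (Rabs z0 + 1)).
  { apply Rdiv_lt_0_compat. apply Rabs_pos_lt; exact H0. pose proof (Rabs_pos z0); lra. }
  assert (Hq1' : Rabs q < 1) by (rewrite Rabs_pos_eq; lra).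
  destruct (pow_lt_1_zero q Hq1' _ Hrz) as [N HN].
  assert (key : forall k, (k >= N)%nat -> Rabs y0 <= q ^ k * z0 -> False).
  { intros k Hk Hle.
    specialize (HN k Hk). rewrite Rabs_pos_eq in HN by (apply pow_le; lra).
    assert (Hqk : 0 <= q ^ k) by (apply pow_le; lra).
    assert (Hz1 : q ^ k * z0 <= q ^ k * Rabs z0) by (apply Rmult_le_compat_l; [lra| apply Rle_abs]).
    assert (Hz2 : q ^ k * Rabs z0 <= Rabs y0 / (Rabs z0 + 1) * Rabs z0)
      by (apply Rmult_le_compat_r; [apply Rabs_pos|lra]).
    assert (Hz3 : Rabs y0 / (Rabs z0 + 1) * Rabs z0 < Rabs y0).
    { pose proof (Rabs_pos z0). pose proof (Rabs_pos_lt y0 H0).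
      apply (Rmult_lt_reg_r (Rabs z0 + 1)); [lra|]. field_simplify; nra. }
    lra. }
  destruct (Rlt_or_le 0 y0) as [Hp|Hn].
  - apply (key (2 * N)%nat); [lia|].
    pose proof (Hineq (2 * N)%nat) as Hi. rewrite Hmq, Hlq, pow_1_even in Hi.
    pose proof (pow_lt M (2*N) HM).
    rewrite Rabs_pos_eq by lra.
    apply (Rmult_le_reg_r (M ^ (2*N))); [lra|].  nra.
  - apply (key (S (2 * N))%nat); [lia|].
    pose proof (Hineq (S (2 * N))%nat) as Hi. rewrite Hmq, Hlq, pow_1_odd in Hi.
    pose proof (pow_lt M (S (2*N)) HM).
    rewrite Rabs_left1 by lra.
    apply (Rmult_le_reg_r (M ^ (S (2*N)))); [lra|].  nra.
Qed.

Fixpoint useq (t d : R) (n : nat) : R :=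
  match n with
  | O => 0
  | S O => 1
  | S ((S m) as k) => t * useq t d k - d * useq t d m
  end.

Lemma core (al be : nat -> R) (t d : R) :
  (forall k, al (S (S k)) = t * al (S k) - d * al k) ->
  (forall k, be (S (S k)) = t * be (S k) - d * be k) ->
  (forall k, 0 <= al k) -> (forall k, 0 <= be k) ->
  (forall k, 0 < al k + be k) -> 0 < al 0%nat -> 0 < be 0%nat ->
  (forall k, 0 <= al 0%nat * be k - be 0%nat * al k) \/
  (forall k, al 0%nat * be k - be 0%nat * al k <= 0).
Proof.
  intros Hra Hrb Ha Hb Hs Ha0 Hb0.
  set (D k := al k * be (S k) - be k * al (S k)).
  set (F k := al 0%nat * be k - be 0%nat * al k).
  assert (HD : forall k, D k = d ^ k * D 0%nat).
  { induction k. simpl; ring.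
    replace (D (S k)) with (d * D k). rewrite IHk; simpl; ring.
    unfold D. rewrite Hra, Hrb. ring. }
  assert (HFu : forall k, F k = D 0%nat * useq t d k /\ F (S k) = D 0%nat * useq t d (S k)).
  { induction k. simpl. unfold F, D. split; ring.
    destruct IHk as [I1 I2]. split. exact I2.
    change (useq t d (S (S k))) with (t * useq t d (S k) - d * useq t d k).
    replace (F (S (S k))) with (t * F (S k) - d * F k).
    rewrite I1, I2. ring. unfold F. rewrite Hra, Hrb. ring. }
  assert (Hid : forall k, F (S k) * (al k + be k) = F k * (al (S k) + be (S k)) + D k * (al 0%nat + be 0%nat)).
  { intro k. unfold F, D. ring. }
  change ((forall k, 0 <= F k) \/ (forall k, F k <= 0)).
  assert (HD0def : D 0%nat = al 0%nat * be 1%nat - be 0%nat * al 1%nat) by reflexivity.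
  assert (HF0 : F 0%nat = 0) by (unfold F; ring).
  clearbody D F.
  destruct (Rle_or_lt 0 d) as [Hd|Hd].
  - assert (Hdk : forall k, 0 <= d ^ k) by (intro; apply pow_le; lra).
    destruct (Rle_or_lt 0 (D 0%nat)) as [HD0|HD0].
    + left. induction k. lra.
      pose proof (Hid k). pose proof (Hs k). pose proof (Hs (S k)). pose proof (Hs 0%nat).
      rewrite HD in H. pose proof (Hdk k).
      assert (0 <= F k * (al (S k) + be (S k))) by (apply Rmult_le_pos; lra).
      assert (0 <= d ^ k * D 0%nat * (al 0%nat + be 0%nat)) by (apply Rmult_le_pos; [apply Rmult_le_pos|]; lra).
      assert (0 <= F (S k) * (al k + be k)) by lra. nra.
    + right. induction k. lra.
      pose proof (Hid k). pose proof (Hs k). pose proof (Hs (S k)). pose proof (Hs 0%nat).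
      rewrite HD in H. pose proof (Hdk k).
      assert (0 <= - F k * (al (S k) + be (S k))) by (apply Rmult_le_pos; lra).
      assert (0 <= d ^ k * (- D 0%nat) * (al 0%nat + be 0%nat)) by (apply Rmult_le_pos; [apply Rmult_le_pos|]; lra).
      assert (F (S k) * (al k + be k) <= 0) by lra. nra.
  - destruct (Rle_or_lt 0 t) as [Ht|Ht].
    + assert (Hu : forall k, 0 <= useq t d k /\ 0 <= useq t d (S k)).
      { induction k. simpl; lra. destruct IHk as [I1 I2]. split. exact I2.
        change (useq t d (S (S k))) with (t * useq t d (S k) - d * useq t d k). nra. }
      destruct (Rle_or_lt 0 (D 0%nat)) as [HD0|HD0].
      * left. intro k. destruct (HFu k) as [E _]. rewrite E. destruct (Hu k). nra.
      * right. intro k. destruct (HFu k) as [E _]. rewrite E. destruct (Hu k). nra.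
    + set (disc := t * t - 4 * d). assert (Hde : disc = t*t-4*d) by reflexivity. clearbody disc.
      assert (Hdisc : 0 < disc) by nra.
      pose proof (sqrt_sqrt disc (Rlt_le _ _ Hdisc)) as Hsq.
      pose proof (sqrt_pos disc) as Hsp.
      set (l := (t + sqrt disc) / 2). set (m := (t - sqrt disc) / 2). assert (Hle : l = (t + sqrt disc) / 2) by reflexivity. assert (Hme : m = (t - sqrt disc) / 2) by reflexivity. clearbody l m.
      assert (Hlm1 : l + m = t) by (rewrite Hle, Hme; field).
      assert (Hlm2 : l * m = d) by (rewrite Hle, Hme; nra).
      assert (Hl : 0 < l) by (rewrite Hle; nra).
      assert (Hl2 : l < - m) by (rewrite Hle, Hme; lra).
      pose proof (eig_lemma al t d l m Hra Hlm1 Hlm2 Hl Hl2 Ha) as E1.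
      pose proof (eig_lemma be t d l m Hrb Hlm1 Hlm2 Hl Hl2 Hb) as E2.
      assert (HD0 : D 0%nat = 0) by (rewrite HD0def, E1, E2; ring).
      left. intro k. destruct (HFu k) as [E _]. rewrite E, HD0. lra.
Qed.
Lemma L_pos (c1 c2 : R) (v : vec2) : c1 * fst v + c2 * snd v > 0 ->
  exists eta, eta > 0 /\ forall z, dist2 v z < eta ^ 2 -> c1 * fst z + c2 * snd z > 0.
Proof.
  intros H. set (h := c1 * fst v + c2 * snd v) in *.
  set (C := c1 * c1 + c2 * c2).
  assert (HCe : C = c1 * c1 + c2 * c2) by reflexivity. assert (HC : 0 <= C) by nra. clearbody C.
  exists (h / (C + 1)). split. apply Rdiv_lt_0_compat; lra.
  intros z Hz. unfold dist2 in Hz.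
  set (d1 := fst v - fst z) in *. set (d2 := snd v - snd z) in *.
  assert (E : c1 * fst z + c2 * snd z = h - (c1 * d1 + c2 * d2)) by (unfold h, d1, d2; ring).
  rewrite E. clearbody d1 d2 h.
  set (e := h / (C + 1)) in *. assert (Hee : e * (C + 1) = h) by (unfold e; field; lra). clearbody e.
  assert (CS : (c1 * d1 + c2 * d2) ^ 2 <= C * (d1 ^ 2 + d2 ^ 2)).
  { rewrite HCe. assert (0 <= (c1 * d2 - c2 * d1) ^ 2) by (apply pow2_ge_0).
    assert (C0: (c1 * c1 + c2 * c2) * (d1 ^ 2 + d2 ^ 2) - (c1 * d1 + c2 * d2) ^ 2 = (c1 * d2 - c2 * d1) ^ 2) by ring. lra. }
  assert (He : 0 < e) by nra.
  assert (S2 : C * (d1 ^ 2 + d2 ^ 2) <= C * e ^ 2) by (apply Rmult_le_compat_l; lra).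
  assert (S3 : C * e ^ 2 < h ^ 2) by (rewrite <- Hee; nra).
  assert (S4 : (c1 * d1 + c2 * d2) ^ 2 < h ^ 2) by lra.
  assert (Hh : 0 < h) by nra.
  nra.
Qed.

Lemma L_closure (P : vec2 -> Prop) (c1 c2 : R) (v : vec2) :
  (forall eps, eps > 0 -> exists y, P y /\ dist2 v y < eps ^ 2) ->
  (forall y, P y -> c1 * fst y + c2 * snd y > 0) -> c1 * fst v + c2 * snd v >= 0.
Proof.
  intros H1 H2. destruct (Rge_or_gt (c1 * fst v + c2 * snd v) 0) as [G|G]; [exact G|].
  destruct (L_pos (- c1) (- c2) v) as [eta [He Hz]]. lra.
  destruct (H1 eta He) as [y [Py Hy]].
  specialize (Hz y Hy). specialize (H2 y Py). lra.
Qed.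

Lemma near_out (P : vec2 -> Prop) (v : vec2) (c1 c2 e1 e2 : R) :
  (forall eps, eps > 0 -> exists z, ~ P z /\ dist2 v z < eps ^ 2) ->
  c1 * fst v + c2 * snd v > 0 -> e1 * fst v + e2 * snd v > 0 ->
  exists z, ~ P z /\ c1 * fst z + c2 * snd z > 0 /\ e1 * fst z + e2 * snd z > 0.
Proof.
  intros H Hc He.
  destruct (L_pos _ _ _ Hc) as [n1 [Hn1 Z1]].
  destruct (L_pos _ _ _ He) as [n2 [Hn2 Z2]].
  assert (Hm : Rmin n1 n2 > 0) by (apply Rmin_glb_lt; lra).
  destruct (H _ Hm) as [z [Pz Hz]].
  pose proof (Rmin_l n1 n2). pose proof (Rmin_r n1 n2).
  exists z. split; [exact Pz|split].
  - apply Z1. assert (Rmin n1 n2 ^ 2 <= n1 ^ 2) by nra. lra.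
  - apply Z2. assert (Rmin n1 n2 ^ 2 <= n2 ^ 2) by nra. lra.
Qed.

Lemma powA_lin (A : mat22) (k : nat) (a b : R) (x y : vec2) :
  powA A k (a * fst x + b * fst y, a * snd x + b * snd y) =
  (a * fst (powA A k x) + b * fst (powA A k y), a * snd (powA A k x) + b * snd (powA A k y)).
Proof.
  induction k. reflexivity.
  unfold powA in *. simpl. rewrite IHk. unfold mulA. simpl. f_equal; ring.
Qed.

Lemma f_lin (A : mat22) (B : mat12) (k : nat) (x : vec2) :
  mulB B (powA A k x) = fst x * mulB B (powA A k (1, 0)) + snd x * mulB B (powA A k (0, 1)).
Proof.
  destruct x as [x1 x2].
  replace (x1, x2) with (x1 * fst (1, 0) + x2 * fst (0, 1), x1 * snd (1, 0) + x2 * snd (0, 1))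
    by (simpl; f_equal; ring).
  rewrite powA_lin. unfold mulB. simpl. ring.
Qed.

Lemma CH (A : mat22) (B : mat12) (k : nat) (x : vec2) :
  mulB B (powA A (S (S k)) x) =
  (a11 A + a22 A) * mulB B (powA A (S k) x) - (a11 A * a22 A - a12 A * a21 A) * mulB B (powA A k x).
Proof.
  unfold powA. simpl.
  unfold mulA, mulB; simpl. ring.
Qed.

Lemma finish (a b a0 b0 ak bk : R) :
  0 <= ak -> 0 <= bk -> 0 < ak + bk -> 0 < a0 -> 0 < b0 ->
  a * a0 - b * b0 > 0 -> a * a0 + b * b0 > 0 -> a * ak + b * bk <= 0 ->
  a0 * bk <= b0 * ak -> False.
Proof.
  intros H1 H2 H3 H4 H5 H6 H7 H8 H9.
  assert (Ha : a > 0) by nra.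
  assert (Hak : ak = 0).
  { destruct (Rle_or_lt 0 b) as [Hb|Hb].
    - assert (0 <= b * bk) by (apply Rmult_le_pos; lra).
      assert (a * ak <= 0) by lra.
      nra.
    - assert (E1 : a0 * (a * ak + b * bk) <= 0) by nra.
      assert (E2 : 0 <= (- b) * (b0 * ak - a0 * bk)) by (apply Rmult_le_pos; lra).
      assert (E3 : (a * a0 + b * b0) * ak <= 0) by nra.
      nra. }
  subst. nra.
Qed.

Theorem lemma3 (A : mat22) (B : mat12) (v1 v2 : vec2) :
  v1 <> (0, 0) -> v2 <> (0, 0) ->
  (forall t : R, t > 0 -> v2 <> scal t v1) ->
  (forall x : vec2, boundary (NT A B) x <-> (ray v1 x \/ ray v2 x)) ->
  (forall x, ray v1 x -> mulB B x = 0) \/ (forall x, ray v2 x -> mulB B x = 0).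
Proof.
  intros Hv1 Hv2 Hnp Hbd.
  destruct v1 as [p q], v2 as [r s].
  apply NNPP; intro Hno. apply not_or_and in Hno. destruct Hno as [N1 N2].
  assert (HB1 : mulB B (p, q) <> 0).
  { intro E. apply N1. intros x [t [Ht ->]]. unfold mulB, scal in *; simpl in *. nra. }
  assert (HB2 : mulB B (r, s) <> 0).
  { intro E. apply N2. intros x [t [Ht ->]]. unfold mulB, scal in *; simpl in *. nra. }
  assert (bd1 : boundary (NT A B) (p, q)).
  { apply Hbd. left. exists 1. split. lra. unfold scal; simpl; f_equal; ring. }
  assert (bd2 : boundary (NT A B) (r, s)).
  { apply Hbd. right. exists 1. split. lra. unfold scal; simpl; f_equal; ring. }
  assert (in1 : forall eps, eps > 0 -> exists y, NT A B y /\ dist2 (p, q) y < eps ^ 2)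
    by (intros e He; exact (proj1 (bd1 e He))).
  assert (out1 : forall eps, eps > 0 -> exists y, ~ NT A B y /\ dist2 (p, q) y < eps ^ 2)
    by (intros e He; exact (proj2 (bd1 e He))).
  assert (in2 : forall eps, eps > 0 -> exists y, NT A B y /\ dist2 (r, s) y < eps ^ 2)
    by (intros e He; exact (proj1 (bd2 e He))).
  assert (out2 : forall eps, eps > 0 -> exists y, ~ NT A B y /\ dist2 (r, s) y < eps ^ 2)
    by (intros e He; exact (proj2 (bd2 e He))).
  clear bd1 bd2 Hbd.
  pose (c1 := fun k => mulB B (powA A k (1, 0))).
  pose (c2 := fun k => mulB B (powA A k (0, 1))).
  assert (Hf : forall k x, mulB B (powA A k x) = c1 k * fst x + c2 k * snd x)
    by (intros; rewrite f_lin; unfold c1, c2; ring).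
  clearbody c1 c2.
  assert (HNT : forall y k, NT A B y -> c1 k * fst y + c2 k * snd y > 0)
    by (intros y k Hy; rewrite <- Hf; apply Hy).
  pose (al := fun k => c1 k * p + c2 k * q).
  pose (be := fun k => c1 k * r + c2 k * s).
  assert (Hal : forall k, al k = mulB B (powA A k (p, q))) by (intro; rewrite Hf; reflexivity).
  assert (Hbe : forall k, be k = mulB B (powA A k (r, s))) by (intro; rewrite Hf; reflexivity).
  assert (Hale : forall k, al k = c1 k * p + c2 k * q) by reflexivity.
  assert (Hbee : forall k, be k = c1 k * r + c2 k * s) by reflexivity.
  clearbody al be.
  assert (Ha : forall k, 0 <= al k).
  { intro k. rewrite Hale. pose proof (L_closure (NT A B) (c1 k) (c2 k) (p, q) in1 (fun y Hy => HNT y k Hy)).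
    simpl in H. lra. }
  assert (Hb : forall k, 0 <= be k).
  { intro k. rewrite Hbee. pose proof (L_closure (NT A B) (c1 k) (c2 k) (r, s) in2 (fun y Hy => HNT y k Hy)).
    simpl in H. lra. }
  assert (Ha0 : 0 < al 0%nat).
  { pose proof (Ha 0%nat). rewrite Hal in *. simpl in *. unfold powA in *; simpl in *. lra. }
  assert (Hb0 : 0 < be 0%nat).
  { pose proof (Hb 0%nat). rewrite Hbe in *. simpl in *. unfold powA in *; simpl in *. lra. }
  assert (Hd : p * s - q * r <> 0).
  { intro Hd0. apply (Hnp (be 0%nat / al 0%nat)).
    - apply Rdiv_lt_0_compat; lra.
    - rewrite Hal, Hbe. unfold powA, mulB, scal; simpl.
      rewrite Hal in Ha0. unfold powA, mulB in Ha0; simpl in Ha0.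
      set (K := b1 B * p + b2 B * q) in *.
      assert (E1 : r * K - (b1 B * r + b2 B * s) * p = - b2 B * (p * s - q * r)) by (unfold K; ring).
      assert (E2 : s * K - (b1 B * r + b2 B * s) * q = b1 B * (p * s - q * r)) by (unfold K; ring).
      rewrite Hd0 in E1, E2. clearbody K.
      f_equal.
      + replace ((b1 B * r + b2 B * s) / K * p) with ((b1 B * r + b2 B * s) * p / K) by (field; lra).
        apply (Rmult_eq_reg_r K); [|lra]. unfold Rdiv. rewrite Rmult_assoc, Rinv_l by lra. lra.
      + replace ((b1 B * r + b2 B * s) / K * q) with ((b1 B * r + b2 B * s) * q / K) by (field; lra).
        apply (Rmult_eq_reg_r K); [|lra]. unfold Rdiv. rewrite Rmult_assoc, Rinv_l by lra. lra. }
  assert (Hs : forall k, 0 < al k + be k).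
  { intro k. destruct (Rlt_or_le 0 (al k + be k)) as [G|G]; [exact G|exfalso].
    pose proof (Ha k). pose proof (Hb k).
    assert (Z1 : al k = 0) by lra. assert (Z2 : be k = 0) by lra.
    rewrite Hale in Z1. rewrite Hbee in Z2.
    assert (C1 : c1 k * (p * s - q * r) = 0).
    { replace (c1 k * (p * s - q * r)) with (s * (c1 k * p + c2 k * q) - q * (c1 k * r + c2 k * s)) by ring.
      rewrite Z1, Z2. ring. }
    assert (C2 : c2 k * (p * s - q * r) = 0).
    { replace (c2 k * (p * s - q * r)) with (p * (c1 k * r + c2 k * s) - r * (c1 k * p + c2 k * q)) by ring.
      rewrite Z1, Z2. ring. }
    apply Rmult_integral in C1. apply Rmult_integral in C2.
    destruct C1 as [C1|C1]; [|contradiction]. destruct C2 as [C2|C2]; [|contradiction].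
    destruct (in1 1) as [y [Hy _]]; [lra|].
    pose proof (HNT y k Hy). rewrite C1, C2 in H1. lra. }
  assert (Hra : forall k, al (S (S k)) = (a11 A + a22 A) * al (S k) - (a11 A * a22 A - a12 A * a21 A) * al k)
    by (intro; rewrite !Hal; apply CH).
  assert (Hrb : forall k, be (S (S k)) = (a11 A + a22 A) * be (S k) - (a11 A * a22 A - a12 A * a21 A) * be k)
    by (intro; rewrite !Hbe; apply CH).
  set (d := p * s - q * r) in *.
  destruct (core al be _ _ Hra Hrb Ha Hb Hs Ha0 Hb0) as [HF|HF].
  -
    destruct (near_out (NT A B) (r, s) ((- q * be 0%nat - s * al 0%nat) / d) ((p * be 0%nat + r * al 0%nat) / d)
        ((- q * be 0%nat + s * al 0%nat) / d) ((p * be 0%nat - r * al 0%nat) / d) out2) as [z [Hz [P1 P2]]].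
    { simpl. replace ((- q * be 0%nat - s * al 0%nat) / d * r + (p * be 0%nat + r * al 0%nat) / d * s) with (be 0%nat)
        by (unfold d in *; field; exact Hd). lra. }
    { simpl. replace ((- q * be 0%nat + s * al 0%nat) / d * r + (p * be 0%nat - r * al 0%nat) / d * s) with (be 0%nat)
        by (unfold d in *; field; exact Hd). lra. }
    destruct z as [z1 z2]. simpl in P1, P2.
    apply not_all_ex_not in Hz. destruct Hz as [k Hk]. apply Rnot_lt_le in Hk.
    rewrite Hf in Hk. simpl in Hk.
    set (a := (z1 * s - z2 * r) / d). set (b := (p * z2 - q * z1) / d).
    apply (finish b a (be 0%nat) (al 0%nat) (be k) (al k)); auto.
    + rewrite Rplus_comm; auto.
    + replace (b * be 0%nat - a * al 0%nat) with
        ((- q * be 0%nat - s * al 0%nat) / d * z1 + (p * be 0%nat + r * al 0%nat) / d * z2)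
        by (unfold a, b, d in *; field; exact Hd). exact P1.
    + replace (b * be 0%nat + a * al 0%nat) with
        ((- q * be 0%nat + s * al 0%nat) / d * z1 + (p * be 0%nat - r * al 0%nat) / d * z2)
        by (unfold a, b, d in *; field; exact Hd). exact P2.
    + replace (b * be k + a * al k) with (c1 k * z1 + c2 k * z2)
        by (unfold a, b, d in *; rewrite Hale, Hbee; field; exact Hd). exact Hk.
    + specialize (HF k). lra.
  -
    destruct (near_out (NT A B) (p, q) ((s * al 0%nat + q * be 0%nat) / d) ((- r * al 0%nat - p * be 0%nat) / d)
        ((s * al 0%nat - q * be 0%nat) / d) ((- r * al 0%nat + p * be 0%nat) / d) out1) as [z [Hz [P1 P2]]].
    { simpl. replace ((s * al 0%nat + q * be 0%nat) / d * p + (- r * al 0%nat - p * be 0%nat) / d * q) with (al 0%nat)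
        by (unfold d in *; field; exact Hd). lra. }
    { simpl. replace ((s * al 0%nat - q * be 0%nat) / d * p + (- r * al 0%nat + p * be 0%nat) / d * q) with (al 0%nat)
        by (unfold d in *; field; exact Hd). lra. }
    destruct z as [z1 z2]. simpl in P1, P2.
    apply not_all_ex_not in Hz. destruct Hz as [k Hk]. apply Rnot_lt_le in Hk.
    rewrite Hf in Hk. simpl in Hk.
    set (a := (z1 * s - z2 * r) / d). set (b := (p * z2 - q * z1) / d).
    apply (finish a b (al 0%nat) (be 0%nat) (al k) (be k)); auto.
    + replace (a * al 0%nat - b * be 0%nat) with
        ((s * al 0%nat + q * be 0%nat) / d * z1 + (- r * al 0%nat - p * be 0%nat) / d * z2)
        by (unfold a, b, d in *; field; exact Hd). exact P1.
    + replace (a * al 0%nat + b * be 0%nat) with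
        ((s * al 0%nat - q * be 0%nat) / d * z1 + (- r * al 0%nat + p * be 0%nat) / d * z2)
        by (unfold a, b, d in *; field; exact Hd). exact P2.
    + replace (a * al k + b * be k) with (c1 k * z1 + c2 k * z2)
        by (unfold a, b, d in *; rewrite Hale, Hbee; field; exact Hd). exact Hk.
    + specialize (HF k). lra.
Qed.
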